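(* For all integers $k,l\ge1$, $sat^*([k]\times[l],\{\vee_2,\wedge_2\})=\max\{k,l\}$.
   Context: $[k]\times[l]$ is ordered coordinatewise. $\vee_2$ is the poset on three elements $a,b_1,b_2$ whose only relations are $a<b_1,a<b_2$; $\wedge_2$ is the poset on three elements $a,b_1,b_2$ whose only relations are $b_1<a,b_2<a$. For posets $P,R$, $P$ is a strong subposet of $R$ if there is an injection $i:P\to R$ with $p\le_P p'\iff i(p)\le_R i(p')$. A subset $F\subseteq Q$ is strong $\{\vee_2,\wedge_2\}$-saturated if neither $\vee_2$ nor $\wedge_2$ is a strong subposet of $F$, but for every $x\in Q\setminus F$, at least one of $\vee_2,\wedge_2$ is a strong subposet of $F\cup\{x\}$. $sat^*(Q,\{\vee_2,\wedge_2\})$ is the minimum size of such a subset. *)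

(* Defs.v *)
From mathcomp Require Import all_boot.
Set Implicit Arguments. Unset Strict Implicit. Unset Printing Implicit Defensive.

(* The grid [k] x [l], with [k] = {1,...,k} represented by 'I_k = {0,...,k-1}
   (order-isomorphic), ordered coordinatewise. *)
Definition grid (k l : nat) : finType := ('I_k * 'I_l)%type.

Definition grid_le (k l : nat) : rel (grid k l) :=
  fun x y => (x.1 <= y.1)%N && (x.2 <= y.2)%N.

(* The three-element posets; elements of 'I_3: 0 = a, 1 = b1, 2 = b2. *)
Definition vee2_le : rel 'I_3 := fun x y => (x == y) || (val x == 0).
Definition wedge2_le : rel 'I_3 := fun x y => (x == y) || (val y == 0).

Definition strong_subposet (P T : finType) (leP : rel P) (leT : rel T)
    (F : {set T}) : Prop :=
  exists i : P -> T,
    [/\ injective i, (forall p, i p \in F) &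
        (forall p p', leP p p' = leT (i p) (i p'))].

Definition has_V_or_W (k l : nat) (F : {set grid k l}) : Prop :=
  strong_subposet vee2_le (@grid_le k l) F \/
  strong_subposet wedge2_le (@grid_le k l) F.

Definition strong_VW_saturated (k l : nat) (F : {set grid k l}) : Prop :=
  [/\ ~ strong_subposet vee2_le (@grid_le k l) F,
      ~ strong_subposet wedge2_le (@grid_le k l) F &
      forall x : grid k l, x \notin F -> has_V_or_W (x |: F)].

Definition sat_star_is (k l m : nat) : Prop :=
  (exists F : {set grid k l}, strong_VW_saturated F /\ #|F| = m) /\
  (forall F : {set grid k l}, strong_VW_saturated F -> (m <= #|F|)%N).

(* Main.v *)
Require Import Defs.
From mathcomp Require Import all_boot zify.
Set Implicit Arguments. Unset Strict Implicit. Unset Printing Implicit Defensive.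

Definition isV (T : finType) (le : rel T) (F : {set T}) := exists a b c,
  [/\ a \in F, b \in F, c \in F &
   [/\ le a b, le a c, ~~ le b a, ~~ le c a & ~~ le b c && ~~ le c b]].
Definition isW (T : finType) (le : rel T) (F : {set T}) := exists a b c,
  [/\ a \in F, b \in F, c \in F &
   [/\ le b a, le c a, ~~ le a b, ~~ le a c & ~~ le b c && ~~ le c b]].

Definition o0 : 'I_3 := @Ordinal 3 0 isT.
Definition o1 : 'I_3 := @Ordinal 3 1 isT.
Definition o2 : 'I_3 := @Ordinal 3 2 isT.

Lemma I3_cases (p : 'I_3) : [\/ p = o0, p = o1 | p = o2].
Proof.
case: p => [[|[|[|m]]] Hm].
- by constructor 1; apply: val_inj.
- by constructor 2; apply: val_inj.
- by constructor 3; apply: val_inj.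
- by [].
Qed.

Lemma V_iff (T : finType) (le : rel T) (F : {set T}) :
  reflexive le -> strong_subposet vee2_le le F <-> isV le F.
Proof.
move=> refl; split.
- case=> i [inj iF H].
  exists (i o0), (i o1), (i o2); split; rewrite ?iF //.
  by rewrite -!H.
- case=> a [b [c [Fa Fb Fc [ab ac ba ca /andP [bc cb]]]]].
  exists (fun p : 'I_3 => if val p == 0 then a else if val p == 1 then b else c).
  have nab : a != b by apply/eqP => E; move: ba; rewrite E refl.
  have nac : a != c by apply/eqP => E; move: ca; rewrite E refl.
  have nbc : b != c by apply/eqP => E; move: bc; rewrite E refl.
  split.
  + move=> p q; case: (I3_cases p) => ->; case: (I3_cases q) => -> //= E;
    by move: nab nac nbc; rewrite ?E ?eqxx.
  + by move=> p; case: (I3_cases p) => ->.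
  + move=> p q; case: (I3_cases p) => ->; case: (I3_cases q) => -> /=;
    by rewrite /vee2_le /= ?refl ?ab ?ac ?(negbTE ba) ?(negbTE ca) ?(negbTE bc) ?(negbTE cb).
Qed.

Lemma W_iff (T : finType) (le : rel T) (F : {set T}) :
  reflexive le -> strong_subposet wedge2_le le F <-> isW le F.
Proof.
move=> refl; split.
- case=> i [inj iF H].
  exists (i o0), (i o1), (i o2); split; rewrite ?iF //.
  by rewrite -!H.
- case=> a [b [c [Fa Fb Fc [ab ac ba ca /andP [bc cb]]]]].
  exists (fun p : 'I_3 => if val p == 0 then a else if val p == 1 then b else c).
  have nab : a != b by apply/eqP => E; move: ba; rewrite E refl.
  have nac : a != c by apply/eqP => E; move: ca; rewrite E refl.
  have nbc : b != c by apply/eqP => E; move: bc; rewrite E refl.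
  split.
  + move=> p q; case: (I3_cases p) => ->; case: (I3_cases q) => -> //= E;
    by move: nab nac nbc; rewrite ?E ?eqxx.
  + by move=> p; case: (I3_cases p) => ->.
  + move=> p q; case: (I3_cases p) => ->; case: (I3_cases q) => -> /=;
    by rewrite /wedge2_le /= ?refl ?ab ?ac ?(negbTE ba) ?(negbTE ca) ?(negbTE bc) ?(negbTE cb).
Qed.

Definition gcomp k l (x y : grid k l) := grid_le x y || grid_le y x.

Lemma grid_refl k l : reflexive (@grid_le k l).
Proof. by move=> x; rewrite /grid_le !leqnn. Qed.

Lemma comp_trans k l (F : {set grid k l}) :
  ~ isV (@grid_le k l) F -> ~ isW (@grid_le k l) F ->
  forall a b c, a \in F -> b \in F -> c \in F -> gcomp a b -> gcomp b c -> gcomp a c.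
Proof.
move=> nV nW a b c Fa Fb Fc ab bc.
case: (boolP (gcomp a c)) => // nac; exfalso.
move: ab bc nac; rewrite /gcomp /grid_le => ab bc nac.
case/orP: ab => ab; case/orP: bc => bc.
- lia.
- apply: nW; exists b, a, c; split => //; rewrite /grid_le; split; lia.
- apply: nV; exists b, a, c; split => //; rewrite /grid_le; split; lia.
- lia.
Qed.

Lemma key k l (F : {set grid k l}) (x : grid k l) :
  ~ isV (@grid_le k l) F -> ~ isW (@grid_le k l) F -> x \notin F ->
  (forall f g, f \in F -> g \in F -> gcomp f x -> gcomp g x -> gcomp f g) ->
  (forall f h, f \in F -> h \in F -> gcomp f x -> gcomp f h -> gcomp h x) ->
  ~ has_V_or_W (x |: F).
Proof.
move=> nV nW xF N1 N2 [/(V_iff _ (@grid_refl k l))|/(W_iff _ (@grid_refl k l))].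
- case=> a [b [c [Fa Fb Fc R]]].
  rewrite /gcomp /grid_le in N1 N2; move: R.
  case/setU1P: Fa => [->|Fa]; case/setU1P: Fb => [->|Fb]; case/setU1P: Fc => [->|Fc];
    rewrite /grid_le.
  all: try by (case=> *; lia).
  + case=> *; have := N1 b c Fb Fc; lia.
  + case=> *; have := N2 a c Fa Fc; lia.
  + case=> *; have := N2 a b Fa Fb; lia.
  + move=> R; apply: nV; exists a, b, c; split => //.
- case=> a [b [c [Fa Fb Fc R]]].
  rewrite /gcomp /grid_le in N1 N2; move: R.
  case/setU1P: Fa => [->|Fa]; case/setU1P: Fb => [->|Fb]; case/setU1P: Fc => [->|Fc];
    rewrite /grid_le.
  all: try by (case=> *; lia).
  + case=> *; have := N1 b c Fb Fc; lia.
  + case=> *; have := N2 a c Fa Fc; lia.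
  + case=> *; have := N2 a b Fa Fb; lia.
  + move=> R; apply: nW; exists a, b, c; split => //.
Qed.

Lemma ss_map (P T T' : finType) (leP leP' : rel P) (le : rel T) (le' : rel T')
  (F : {set T}) (f : T -> T') : injective f ->
  (forall i : P -> T, (forall p p', leP p p' = le (i p) (i p')) ->
     forall p p', leP' p p' = le' (f (i p)) (f (i p'))) ->
  strong_subposet leP le F -> strong_subposet leP' le' (f @: F).
Proof.
move=> finj H [i [iinj iF Hi]]; exists (f \o i); split.
- by move=> p q /= /finj /iinj.
- by move=> p /=; rewrite mem_imset.
- by move=> p q /=; apply: H.
Qed.

Section Map.
Variables (k l k' l' : nat) (f : grid k l -> grid k' l') (rev : bool).
Hypothesis finj : injective f.
Hypothesis fmono : forall x y, grid_le (f x) (f y) = if rev then grid_le y x else grid_le x y.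

Lemma map_V (S : {set grid k l}) :
  strong_subposet vee2_le (@grid_le k l) S ->
  if rev then strong_subposet wedge2_le (@grid_le k' l') (f @: S)
  else strong_subposet vee2_le (@grid_le k' l') (f @: S).
Proof.
case: rev fmono => fm; apply: ss_map => // i Hi p p'; rewrite fm -Hi //.
by rewrite /vee2_le /wedge2_le eq_sym.
Qed.

Lemma map_W (S : {set grid k l}) :
  strong_subposet wedge2_le (@grid_le k l) S ->
  if rev then strong_subposet vee2_le (@grid_le k' l') (f @: S)
  else strong_subposet wedge2_le (@grid_le k' l') (f @: S).
Proof.
case: rev fmono => fm; apply: ss_map => // i Hi p p'; rewrite fm -Hi //.
by rewrite /vee2_le /wedge2_le eq_sym.
Qed.

Lemma map_VW (S : {set grid k l}) : has_V_or_W S -> has_V_or_W (f @: S).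
Proof.
case=> [/map_V|/map_W]; case: rev; rewrite /has_V_or_W; tauto.
Qed.
End Map.

Lemma sat_map k l k' l' (f : grid k l -> grid k' l') (g : grid k' l' -> grid k l)
  (rev : bool) : cancel f g -> cancel g f ->
  (forall x y, grid_le (f x) (f y) = if rev then grid_le y x else grid_le x y) ->
  forall F, strong_VW_saturated F -> strong_VW_saturated (f @: F) /\ #|f @: F| = #|F|.
Proof.
move=> fg gf fm F [nV nW sat].
have finj : injective f := can_inj fg.
have ginj : injective g := can_inj gf.
have gm : forall x y, grid_le (g x) (g y) = if rev then grid_le y x else grid_le x y.
  move=> x y; rewrite -[in RHS](gf x) -[in RHS](gf y) !fm.
  by case: rev fm => _.
have gfF : g @: (f @: F) = F.
  by rewrite -imset_comp (eq_imset _ fg) imset_id.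
split; last by rewrite card_imset.
split.
- move=> /(map_V ginj gm); rewrite gfF; case: rev {fm gm}; tauto.
- move=> /(map_W ginj gm); rewrite gfF; case: rev {fm gm}; tauto.
- move=> y yF.
  have gyF : g y \notin F.
    by apply: contra yF => H; rewrite -(gf y) mem_imset.
  have := map_VW finj fm (sat _ gyF).
  by rewrite imsetU1 gf.
Qed.

Lemma comp_sym k l (x y : grid k l) : gcomp x y = gcomp y x.
Proof. by rewrite /gcomp orbC. Qed.

Lemma comp_refl k l (x : grid k l) : gcomp x x.
Proof. by rewrite /gcomp grid_refl. Qed.

Lemma col_L k l (F : {set grid k l}) (i : 'I_k) : strong_VW_saturated F ->
  (forall f, f \in F -> f.1 != i) -> forall f0, f0 \in F -> f0.1 < i -> False.
Proof.
move=> [nV nW sat] Fi f0 Ff0 f0i.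
have nV' : ~ isV (@grid_le k l) F by move=> /(V_iff _ (@grid_refl k l)).
have nW' : ~ isW (@grid_le k l) F by move=> /(W_iff _ (@grid_refl k l)).
have tr := comp_trans nV' nW'.
have P0 : [pred f : grid k l | (f \in F) && ((@fst 'I_k 'I_l f) < i)] f0 by rewrite /= Ff0 f0i.
case: (arg_minnP (fun f : grid k l => nat_of_ord f.2) P0) => g /andP[Fg gi] gmin.
have P1 : [pred f : grid k l | [&& f \in F, (@fst 'I_k 'I_l f) < i & gcomp f g]] g.
  by rewrite /= Fg gi comp_refl.
case: (arg_maxnP (fun f : grid k l => nat_of_ord f.2) P1) => M /and3P[FM Mi Mg] Mmax.
set x : grid k l := (i, M.2).
have claim : forall f, f \in F -> gcomp f x = gcomp f M.
  move=> f Ff; have := Fi f Ff => fi.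
  case: (ltnP (@fst 'I_k 'I_l f) i) => fi'.
  - apply/idP/idP => H.
    + case: (boolP (gcomp f M)) => // nfM; exfalso.
      have nfg : ~~ gcomp f g.
        by apply: contra nfM => fg; apply: (tr f g M) => //; rewrite comp_sym.
      have := gmin f; rewrite /= Ff fi' => /(_ isT) gf.
      move: H nfM nfg Mg gf; rewrite /gcomp /grid_le /= => H nfM nfg Mg gf.
      lia.
    + have fg : gcomp f g by apply: (tr f M g).
      have := Mmax f; rewrite /= Ff fi' fg => /(_ isT) fM.
      move: fM; rewrite /gcomp /grid_le /= => fM; lia.
  - move: fi fi' Mi; rewrite /gcomp /grid_le /= => fi fi' Mi.
    have : (@fst 'I_k 'I_l f : nat) != i by [].
    lia.
apply: (key nV' nW' _ _ _ (sat x _)).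
- by apply/negP => /Fi; rewrite eqxx.
- move=> f h Ff Fh; rewrite !claim // => fM hM.
  by apply: (tr f M h) => //; rewrite comp_sym.
- move=> f h Ff Fh; rewrite !claim // => fM fh.
  by apply: (tr h f M) => //; rewrite comp_sym.
- by apply/negP => /Fi; rewrite eqxx.
Qed.

Definition rho k l (x : grid k l) : grid k l := (rev_ord x.1, rev_ord x.2).

Lemma rhoK k l : cancel (@rho k l) (@rho k l).
Proof. by case=> a b; rewrite /rho /= !rev_ordK. Qed.

Lemma rho_mono k l (x y : grid k l) :
  grid_le (rho x) (rho y) = if true then grid_le y x else grid_le x y.
Proof.
case: x => a b; case: y => c d; rewrite /rho /grid_le /=.
have := ltn_ord a; have := ltn_ord b; have := ltn_ord c; have := ltn_ord d.
lia.
Qed.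

Lemma col_hit k l (F : {set grid k l}) (i : 'I_k) : 0 < l ->
  strong_VW_saturated F -> exists2 f, f \in F & f.1 = i.
Proof.
move=> hl satF.
case: (boolP [exists f in F, f.1 == i]) => [/existsP[f /andP[Ff /eqP]]|nE].
  by eauto.
have Fi : forall f, f \in F -> f.1 != i.
  move=> f Ff; apply/negP => E; move/negP: nE; apply.
  by apply/existsP; exists f; rewrite Ff.
exfalso.
case: (boolP [exists f in F, f.1 < i]) => [/existsP[f /andP[Ff fi]]|nL].
  exact: (col_L satF Fi Ff fi).
case: (boolP [exists f in F, i < f.1]) => [/existsP[f /andP[Ff fi]]|nR].
  have [satF' _] := @sat_map k l k l (@rho k l) (@rho k l) true (@rhoK k l) (@rhoK k l) (@rho_mono k l) F satF.
  apply: (@col_L k l _ (rev_ord i) satF' _ (rho f) (imset_f _ Ff)).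
  + move=> y /imsetP[g Fg ->] /=.
    by rewrite (inj_eq rev_ord_inj) Fi.
  + move: fi; case: f Ff => a b Ff /= fi; have := ltn_ord a; lia.
have F0 : forall f, f \in F -> False.
  move=> f Ff; have := Fi f Ff.
  have : ~~ (f.1 < i) by apply: contra nL => H; apply/existsP; exists f; rewrite Ff.
  have : ~~ (i < f.1) by apply: contra nR => H; apply/existsP; exists f; rewrite Ff.
  move=> h1 h2 h3; have : (f.1 : nat) != i by [].
  lia.
case: satF => nV nW sat.
have nV' : ~ isV (@grid_le k l) F by move=> /(V_iff _ (@grid_refl k l)).
have nW' : ~ isW (@grid_le k l) F by move=> /(W_iff _ (@grid_refl k l)).
pose x : grid k l := (i, Ordinal hl).
have xF : x \notin F by apply/negP => /F0.
apply: (key nV' nW' xF _ _ (sat x xF)).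
- by move=> f g /F0.
- by move=> f g /F0.
Qed.

Lemma col_bound k l (F : {set grid k l}) : 0 < l -> strong_VW_saturated F -> k <= #|F|.
Proof.
move=> hl satF.
apply: leq_trans (leq_imset_card (fun f : grid k l => f.1) F).
rewrite -{1}(card_ord k) -cardsT; apply: subset_leq_card.
apply/subsetP => i _; have [f Ff <-] := col_hit i hl satF.
exact: imset_f.
Qed.

Definition swp k l (x : grid k l) : grid l k := (x.2, x.1).

Lemma swpK k l : cancel (@swp k l) (@swp l k).
Proof. by case. Qed.

Lemma swp_mono k l (x y : grid k l) :
  grid_le (swp x) (swp y) = if false then grid_le y x else grid_le x y.
Proof. by rewrite /grid_le /= andbC. Qed.

Lemma lower k l (F : {set grid k l}) : 0 < k -> 0 < l ->
  strong_VW_saturated F -> maxn k l <= #|F|.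
Proof.
move=> hk hl satF; rewrite geq_max (col_bound hl satF) /=.
have [satF' <-] := @sat_map k l l k (@swp k l) (@swp l k) false (@swpK k l) (@swpK l k)
   (@swp_mono k l) F satF.
exact: col_bound hk satF'.
Qed.

Section Constr.
Variables (k l : nat).
Hypothesis lk : l <= k.

Definition Hf (a : nat) : nat := if a <= k - l then l else k - a.

Lemma Hf_lt a : a <= k -> Hf a < l.+1.
Proof. rewrite /Hf; case: ifP; lia. Qed.

Definition phi (a : 'I_k.+1) : grid k.+1 l.+1 := (a, inord (Hf a)).

Definition F0 : {set grid k.+1 l.+1} := [set phi a | a in 'I_k.+1].

Lemma F0_card : #|F0| = k.+1.
Proof.
rewrite card_imset ?card_ord //.
by move=> a b [].
Qed.

Lemma memF0P (a : 'I_k.+1) (b : 'I_l.+1) :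
  (a, b) \in F0 <-> (a <= k - l /\ (b : nat) = l) \/ (k - l < a /\ (b : nat) = k - a).
Proof.
have HE : (b : nat) = Hf a <-> (a <= k - l /\ (b : nat) = l) \/ (k - l < a /\ (b : nat) = k - a).
  rewrite /Hf; case: ifP; lia.
rewrite -HE; split.
- case/imsetP => c _ [-> ->]; rewrite inordK //; apply: Hf_lt.
  by have := ltn_ord c; lia.
- move=> E; apply/imsetP; exists a => //; rewrite /phi; congr pair.
  apply: val_inj; rewrite /= inordK // -E; exact: ltn_ord.
Qed.

Lemma mk (p q : nat) : p <= k -> q <= l ->
  exists (y1 : 'I_k.+1) (y2 : 'I_l.+1), (y1 : nat) = p /\ (y2 : nat) = q.
Proof.
move=> hp hq; exists (inord p), (inord q); rewrite !inordK //.
Qed.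

Lemma F0_sat : strong_VW_saturated F0.
Proof.
split.
- move/(V_iff _ (@grid_refl _ _)) => [[a1 a2] [[b1 b2] [[c1 c2] [Fa Fb Fc R]]]].
  move/memF0P: Fa; move/memF0P: Fb; move/memF0P: Fc; case: R; rewrite /grid_le /=.
  have := ltn_ord a1; have := ltn_ord b1; have := ltn_ord c1.
  lia.
- move/(W_iff _ (@grid_refl _ _)) => [[a1 a2] [[b1 b2] [[c1 c2] [Fa Fb Fc R]]]].
  move/memF0P: Fa; move/memF0P: Fb; move/memF0P: Fc; case: R; rewrite /grid_le /=.
  have := ltn_ord a1; have := ltn_ord b1; have := ltn_ord c1.
  lia.
case=> a b xF.
have nF : ~ ((a <= k - l /\ (b : nat) = l) \/ (k - l < a /\ (b : nat) = k - a)).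
  by move/memF0P => H; move: xF; rewrite H.
have ha := ltn_ord a; have hb := ltn_ord b.
have inF : forall (y1 : 'I_k.+1) (y2 : 'I_l.+1),
   (y1 <= k - l /\ (y2 : nat) = l) \/ (k - l < y1 /\ (y2 : nat) = k - y1) ->
   (y1, y2) \in (a, b) |: F0.
  by move=> y1 y2 /memF0P H; rewrite setU1r.
have xin : (a, b) \in (a, b) |: F0 by rewrite setU11.
case: (ltnP b l) => hbl.
- case: (leqP a (k - l)) => had.
  +
    have [B1 [B2 [eB1 eB2]]] := @mk a l ha (leqnn _).
    have [C1 [C2 [eC1 eC2]]] := @mk (k - b) b (leq_subr _ _) (ltnW hbl).
    left; apply/(V_iff _ (@grid_refl _ _)); exists (a, b), (B1, B2), (C1, C2).
    split => //.
    * apply: inF; lia.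
    * apply: inF; lia.
    * rewrite /grid_le /=; split; lia.
  + case: (ltngtP a (k - b)) => hab.
    * have [B1 [B2 [eB1 eB2]]] := @mk a (k - a) ha ltac:(lia).
      have [C1 [C2 [eC1 eC2]]] := @mk (k - b) b (leq_subr _ _) (ltnW hbl).
      left; apply/(V_iff _ (@grid_refl _ _)); exists (a, b), (B1, B2), (C1, C2).
      split => //.
      -- apply: inF; lia.
      -- apply: inF; lia.
      -- rewrite /grid_le /=; split; lia.
    * have [B1 [B2 [eB1 eB2]]] := @mk (k - b) b (leq_subr _ _) (ltnW hbl).
      have [C1 [C2 [eC1 eC2]]] := @mk a (k - a) ha ltac:(lia).
      right; apply/(W_iff _ (@grid_refl _ _)); exists (a, b), (B1, B2), (C1, C2).
      split => //.
      -- apply: inF; lia.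
      -- apply: inF; lia.
      -- rewrite /grid_le /=; split; lia.
    * exfalso; apply: nF; lia.
- have [B1 [B2 [eB1 eB2]]] := @mk (k - l) l (leq_subr _ _) (leqnn _).
  have [C1 [C2 [eC1 eC2]]] := @mk a (k - a) ha ltac:(lia).
  right; apply/(W_iff _ (@grid_refl _ _)); exists (a, b), (B1, B2), (C1, C2).
  split => //.
  * apply: inF; lia.
  * apply: inF; lia.
  * rewrite /grid_le /=; split; lia.
Qed.
End Constr.

Theorem theorem1p9 (k l : nat) (hk : (1 <= k)%N) (hl : (1 <= l)%N) :
  sat_star_is k l (maxn k l).
Proof.
split; last by move=> F; apply: lower.
case: k hk => [//|k] _; case: l hl => [//|l] _.
case: (leqP l k) => lk.
- exists (F0 k l); split; first exact: F0_sat.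
  by rewrite F0_card; apply/esym/maxn_idPl.
- have lk' : k <= l by apply: ltnW.
  have [satF' cardF'] := @sat_map l.+1 k.+1 k.+1 l.+1 (@swp l.+1 k.+1) (@swp k.+1 l.+1)
     false (@swpK _ _) (@swpK _ _) (@swp_mono _ _) _ (F0_sat lk').
  exists (@swp l.+1 k.+1 @: F0 l k); split => //.
  by rewrite cardF' F0_card; apply/esym/maxn_idPr; apply: ltnW.
Qed.
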